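(* For two coprime natural numbers $a$ and $b$, \[ \alpha(\{a, b\}) = \frac{\lfloor \frac{a+b}{2} \rfloor}{a+b}. \]
   Context: For a finite $D \subset \mathbb{N} = \{1,2,\ldots\}$ and $n \geq 1$, the circulant graph $G_n$ with set of distances $D$ has vertex set $\{0, \ldots, n-1\}$, vertices $u, v$ (possibly equal) being adjacent iff $u - v \equiv d$ or $v - u \equiv d \pmod n$ for some $d \in D$. $\alpha(G)$ is the maximum size of an independent set (no two adjacent vertices, no looped vertex), and $\alpha(D) := \lim_{n\to\infty} \alpha(G_n)/n$ (which exists). *)

(* Defs.v *)
From mathcomp Require Import all_boot.
From Stdlib Require Import Reals.

Set Implicit Arguments.
Unset Strict Implicit.
Unset Printing Implicit Defensive.

(* Loops (u ~ u)
   are allowed (e.g. when n divides some d). *)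
Definition circ_adj (D : seq nat) (n : nat) (u v : 'I_n) : bool :=
  has (fun d => (nat_of_ord u == v + d %[mod n]) || (nat_of_ord v == u + d %[mod n])) D.

(* Independent set: no two (possibly equal) vertices are adjacent;
   in particular it contains no looped vertex. *)
Definition circ_independent (D : seq nat) (n : nat) (S : {set 'I_n}) : bool :=
  [forall u in S, forall v in S, ~~ circ_adj D u v].

Definition circ_alpha (D : seq nat) (n : nat) : nat :=
  \max_(S : {set 'I_n} | circ_independent D S) #|S|.

(* The sequence n |-> alpha(G_n)/n whose limit is alpha(D). *)
Definition circ_density (D : seq nat) (n : nat) : R :=
  (INR (circ_alpha D n) / INR n)%R.

(* Main.v *)
Require Import Defs.
From mathcomp Require Import all_boot.
From Stdlib Require Import Reals.
From Stdlib Require Import Lra.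
From mathcomp Require Import zify.

Lemma key_dvd s a d : coprime s a -> 0 < d < s -> ~~ (s %| d * a).
Proof.
move=> co /andP[d0 ds]; rewrite Gauss_dvdl //; apply/negP => /(dvdn_leq d0); lia.
Qed.

Lemma core s a m i j : 0 < a -> coprime s a -> 2 * m <= s -> i < m -> j < m ->
  ~~ (2 * i * a + a == 2 * j * a %[mod s]).
Proof.
move=> a0 co hm hi hj.
have E1 : 2 * i * a + a = (2 * i + 1) * a by rewrite mulnDl mul1n.
rewrite E1.
case: (leqP ((2 * i + 1) * a) (2 * j * a)) => h.
- rewrite eq_sym eqn_mod_dvd // -mulnBl; apply: key_dvd => //.
  rewrite leq_pmul2r // in h; apply/andP; split; lia.
- rewrite eqn_mod_dvd ?(ltnW h) // -mulnBl; apply: key_dvd => //.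
  rewrite ltn_pmul2r // in h; apply/andP; split; lia.
Qed.

Lemma core_inj s a m i j : 0 < a -> coprime s a -> 2 * m <= s -> i < m -> j < m ->
  (2 * i * a == 2 * j * a %[mod s]) -> i = j.
Proof.
move=> a0 co hm hi hj.
wlog h : i j hi hj / i <= j.
  move=> W; case: (leqP i j) => h; first exact: W.
  by rewrite eq_sym => e; symmetry; apply: W => //; exact: ltnW.
rewrite eq_sym eqn_mod_dvd; last by apply: leq_mul => //; apply: leq_mul.
rewrite -mulnBl => hd.
case: (ltngtP i j) => hij; [|lia|exact hij].
have hr : 0 < 2 * j - 2 * i < s by apply/andP; split; lia.
by have := @key_dvd s a _ co hr; rewrite hd.
Qed.

Definition sh n (x : 'I_n.+1) (c : nat) : 'I_n.+1 := inord ((x + c) %% n.+1).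

Arguments sh {n}.

Lemma shE n (x : 'I_n.+1) c : nat_of_ord (sh x c) = (x + c) %% n.+1.
Proof. by rewrite /sh inordK // ltn_pmod. Qed.

Lemma sh_inj n c : injective (fun x : 'I_n.+1 => sh x c).
Proof.
move=> x y /(congr1 val) /=; rewrite !shE => /eqP; rewrite eqn_modDr => /eqP.
by rewrite !modn_small // => e; apply/val_inj.
Qed.

Lemma sum_sh n c (S : {set 'I_n.+1}) : \sum_(x : 'I_n.+1) (sh x c \in S) = #|S|.
Proof.
rewrite -(card_preimset S (@sh_inj n c)) -sum1_card [RHS]big_mkcond /=.
by apply: eq_bigr => x _; rewrite inE; case: (_ \in S).
Qed.

Definition cw a b k := if k <= b then k * a else a * b - (k - b) * b.

Lemma indepP D n (S : {set 'I_n}) u v : circ_independent D S -> u \in S -> v \in S ->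
  ~~ circ_adj D u v.
Proof. by move=> /forallP /(_ u) /implyP H hu hv; move: (H hu) => /forallP /(_ v) /implyP; apply. Qed.

Lemma adj_step a b n (x : 'I_n.+1) k : 0 < a -> k < a + b ->
  circ_adj [:: a; b] (sh x (cw a b k)) (sh x (cw a b k.+1)) ||
  circ_adj [:: a; b] (sh x (cw a b k.+1)) (sh x (cw a b k)).
Proof.
move=> a0 hk; rewrite /circ_adj /= !shE.
case: (leqP k.+1 b) => hkb.
- have e1 : cw a b k = k * a by rewrite /cw ifT //; lia.
  have e2 : cw a b k.+1 = k.+1 * a by rewrite /cw ifT.
  rewrite e1 e2; apply/orP; right; apply/orP; left; apply/orP; left.
  rewrite modn_mod modnDml; apply/eqP; congr (_ %% _). rewrite mulSn; lia.
- have e : cw a b k = cw a b k.+1 + b.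
    rewrite /cw (ifN _ _ (_ : ~~ (k.+1 <= b))); last by rewrite -ltnNge.
    have hp : (k.+1 - b) * b <= a * b by apply: leq_mul => //; lia.
    have hq : (k.+1 - b) * b = (k - b) * b + b.
      by rewrite -mulSnr; congr (_ * _); lia.
    case: ifP => hk2.
      have -> : k = b by lia.
      by rewrite subSnn mul1n mulnC; lia.
    lia.
  rewrite e; apply/orP; left; apply/orP; right; apply/orP; left; apply/orP; left.
  rewrite modn_mod modnDml; apply/eqP; congr (_ %% _); lia.
Qed.

Lemma cnt_le a b n (S : {set 'I_n.+1}) (x : 'I_n.+1) : 0 < a ->
  circ_independent [:: a; b] S ->
  \sum_(0 <= k < a + b) (sh x (cw a b k) \in S) <= (a + b) %/ 2.
Proof.
move=> a0 HS; set F := fun k => nat_of_bool (sh x (cw a b k) \in S).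
have e : \sum_(0 <= k < a + b) F k.+1 = \sum_(0 <= k < a + b) F k.
  have := big_nat_recl (a + b) 0 F (leq0n _) (op := addn) (idx := 0).
  rewrite big_nat_recr //= => h.
  have : F (a + b) = F 0.
    rewrite /F /cw ifN; last by rewrite -ltnNge; lia.
    by rewrite addnK subnn mul0n.
  move=> hF; rewrite hF addnC in h; apply/eqP; rewrite -(eqn_add2l (F 0)) h //.
rewrite leq_divRL // muln2 -addnn.
rewrite -{1}e -big_split /=.
apply: (@leq_trans (\sum_(0 <= k < a + b) 1)); last by rewrite sum_nat_const_nat subn0 muln1.
rewrite [X in _ <= X]big_nat_cond [X in X <= _]big_nat_cond.
apply: leq_sum => k /andP[/andP[_ hk] _].
rewrite /F.
have := @adj_step a b n x k a0 hk.
case h1 : (sh x (cw a b k) \in S); case h2 : (sh x (cw a b k.+1) \in S) => //.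
by case/orP => H; [move: (indepP _ _ _ _ _ HS h1 h2) | move: (indepP _ _ _ _ _ HS h2 h1)]; rewrite H.
Qed.

Lemma upper a b n (S : {set 'I_n.+1}) : 0 < a ->
  circ_independent [:: a; b] S -> (a + b) * #|S| <= n.+1 * ((a + b) %/ 2).
Proof.
move=> a0 HS.
have -> : (a + b) * #|S| = \sum_(0 <= k < a + b) \sum_(x : 'I_n.+1) (sh x (cw a b k) \in S).
  by rewrite (eq_bigr (fun _ => #|S|)) ?sum_nat_const_nat ?subn0 // => k _; rewrite sum_sh.
rewrite exchange_big /=.
have -> : n.+1 * ((a + b) %/ 2) = \sum_(x : 'I_n.+1) ((a + b) %/ 2).
  by rewrite sum_nat_const card_ord.
by apply: leq_sum => x _; apply: cnt_le.
Qed.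
Section C.
Variables (a b n Q m : nat).
Hypotheses (a0 : 0 < a) (b0 : 0 < b) (co : coprime (a + b) a) (hm : 2 * m <= a + b)
  (hQ : Q * (a + b) <= n.+1 - (a + b)).

Definition fv (p : 'I_Q * 'I_m) : nat := p.1 * (a + b) + (2 * p.2 * a) %% (a + b).

Lemma fv_lt p : fv p < n.+1 - (a + b).
Proof.
rewrite /fv; case: p => [q i] /=.
have h1 : (2 * i * a) %% (a + b) < a + b by rewrite ltn_pmod //; lia.
have h2 : q.+1 * (a + b) <= Q * (a + b) by rewrite leq_mul2r ltn_ord orbT.
rewrite mulSn in h2; lia.
Qed.

Definition fI (p : 'I_Q * 'I_m) : 'I_n.+1 := inord (fv p).

Lemma fIE p : nat_of_ord (fI p) = fv p.
Proof. rewrite /fI inordK //; have := fv_lt p; lia. Qed.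

Lemma fI_inj : injective fI.
Proof.
move=> [q i] [q' j] /(congr1 val) /=; rewrite !fIE /fv /= => e.
have s0 : 0 < a + b by lia.
have r1 := ltn_pmod (2 * i * a) s0.
have r2 := ltn_pmod (2 * j * a) s0.
have eq1 : q = q' :> nat.
  by have := congr1 (divn^~ (a + b)) e; rewrite /= !divnMDl // !divn_small // !addn0.
have eq2 : (2 * i * a) %% (a + b) = (2 * j * a) %% (a + b).
  by move: e; rewrite eq1 => /eqP; rewrite eqn_add2l => /eqP.
have eq3 : i = j :> nat.
  by apply: (@core_inj (a+b) a m i j a0 co hm (ltn_ord i) (ltn_ord j)); apply/eqP.
by congr pair; apply/val_inj.
Qed.

Definition lset : {set 'I_n.+1} := [set fI p | p in [set: 'I_Q * 'I_m]].

Lemma card_lset : #|lset| = Q * m.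
Proof. by rewrite card_imset; [rewrite cardsT card_prod !card_ord | exact: fI_inj]. Qed.

Lemma noadj p p' d : (d == a) || (d == b) ->
  ~~ (nat_of_ord (fI p) == nat_of_ord (fI p') + d %[mod n.+1]).
Proof.
move=> hd; rewrite !fIE.
have l1 := fv_lt p; have l2 := fv_lt p'.
rewrite !modn_small; [|lia|lia].
apply/negP => /eqP e.
clear l1 l2; move: p p' e => [q i] [q' j]; rewrite /fv /= => e.
have : (q * (a + b) + (2 * i * a) %% (a + b)) == (q' * (a + b) + (2 * j * a) %% (a + b)) + d %[mod a + b].
  by rewrite e.
rewrite -addnA !modnMDl modn_mod modnDml.
case/orP: hd => /eqP ->.
  rewrite eq_sym => h; move: (@core (a+b) a m j i a0 co hm (ltn_ord j) (ltn_ord i)); by rewrite h.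
rewrite -(eqn_modDr a) -addnA (addnC b a) modnDr => h.
by move: (@core (a+b) a m i j a0 co hm (ltn_ord i) (ltn_ord j)); rewrite h.
Qed.

Lemma lset_indep : circ_independent [:: a; b] lset.
Proof.
apply/forallP => u; apply/implyP => /imsetP [p _ ->].
apply/forallP => v; apply/implyP => /imsetP [p' _ ->].
rewrite /circ_adj /= !negb_or !noadj ?eqxx ?orbT //.
Qed.

End C.

Lemma bounds a b n : 0 < a -> 0 < b -> coprime a b ->
  (a + b) * circ_alpha [:: a; b] n.+1 <= n.+1 * ((a + b) %/ 2) /\
  n.+1 * ((a + b) %/ 2) <= (a + b) * circ_alpha [:: a; b] n.+1 + 2 * (a + b) * ((a + b) %/ 2).
Proof.
move=> a0 b0 co.
have co' : coprime (a + b) a by rewrite coprime_sym /coprime gcdnDl.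
have s0 : 0 < a + b by lia.
have hm : 2 * ((a + b) %/ 2) <= a + b by rewrite mulnC leq_trunc_div.
split.
  have h : circ_alpha [:: a; b] n.+1 <= (n.+1 * ((a + b) %/ 2)) %/ (a + b).
    apply/bigmax_leqP => S HS; rewrite leq_divRL // mulnC; exact: upper.
  by rewrite leq_divRL // mulnC in h.
set Q := (n.+1 - (a + b)) %/ (a + b).
have hQ : Q * (a + b) <= n.+1 - (a + b) by exact: leq_trunc_div.
have hl : Q * ((a + b) %/ 2) <= circ_alpha [:: a; b] n.+1.
  rewrite -(@card_lset a b n Q ((a + b) %/ 2)) //.
  apply: (@leq_bigmax_cond _ (fun S => circ_independent [:: a; b] S) (fun S => #|S|)).
  exact: lset_indep.
have h3 : n.+1 - (a + b) < Q.+1 * (a + b) by exact: ltn_ceil.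
have h4 : n.+1 <= Q.+2 * (a + b) by rewrite !mulSn in h3 *; lia.
have h5 : n.+1 * ((a + b) %/ 2) <= Q.+2 * (a + b) * ((a + b) %/ 2) by rewrite leq_mul2r h4 orbT.
have h6 : (a + b) * (Q * ((a + b) %/ 2)) <= (a + b) * circ_alpha [:: a; b] n.+1 by rewrite leq_mul2l hl orbT.
nia.
Qed.

Lemma real_part (al : nat -> nat) (s m C : nat) : 0 < s ->
  (forall n, s * al n.+1 <= n.+1 * m /\ n.+1 * m <= s * al n.+1 + C) ->
  Un_cv (fun n => INR (al n) / INR n)%R (INR m / INR s)%R.
Proof.
move=> s0 Hb eps Heps.
have C1 : (0 < INR C + 1)%R by have := pos_INR C; lra.
have ep : (0 < eps / (INR C + 1))%R by apply: Rdiv_lt_0_compat.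
have [N0 [HN0 HN0pos]] := archimed_cor1 _ ep.
exists N0 => n Hn.
destruct n as [|n']; first by lia.
have [H1 H2] := Hb n'.
have H1' := le_INR _ _ (elimT leP H1).
have H2' := le_INR _ _ (elimT leP H2).
rewrite !mult_INR in H1'. rewrite (plus_INR (s * al n'.+1) C) !mult_INR in H2'.
set X := INR (al n'.+1) in H1' H2' *.
set Nn := INR n'.+1 in H1' H2' *.
set Ss := INR s in H1' H2' *.
set M := INR m in H1' H2' *.
set Cc := INR C in H1' H2' C1 ep HN0 *.
have Ss1 : (1 <= Ss)%R by rewrite /Ss; have := le_INR 1 s (elimT leP s0); rewrite /=.
have N0p : (0 < INR N0)%R by apply: lt_0_INR.
have NN : (INR N0 <= Nn)%R by apply: le_INR.
have Np : (0 < Nn)%R by lra.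
have iN : (/ Nn < eps / (Cc + 1))%R.
  by apply: Rle_lt_trans HN0; apply: Rinv_le_contravar.
have HC : (Cc + 1 < eps * Nn)%R.
  have := Rmult_lt_compat_r ((Cc + 1) * Nn) _ _ (Rmult_lt_0_compat _ _ C1 Np) iN.
  have -> : (/ Nn * ((Cc + 1) * Nn) = Cc + 1)%R by field; lra.
  have -> : (eps / (Cc + 1) * ((Cc + 1) * Nn) = eps * Nn)%R by field; lra.
  done.
rewrite /R_dist.
set d := (X / Nn - M / Ss)%R.
have hd : (d * (Nn * Ss) = Ss * X - Nn * M)%R by rewrite /d; field; lra.
set P := (Nn * Ss)%R in hd.
have Pp : (0 < P)%R by rewrite /P; nra.
have eP : (eps * Nn <= eps * P)%R by rewrite /P; nra.
apply: Rabs_def1.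
  have : (d * P <= 0)%R by lra.
  nra.
have : (0 < d * P + eps * P)%R by lra.
nra.
Qed.

Theorem proposition4 (a b : nat) :
  0 < a -> 0 < b -> coprime a b ->
  Un_cv (circ_density [:: a; b]) (INR ((a + b) %/ 2) / INR (a + b))%R.
Proof.
move=> a0 b0 co.
apply: (@real_part (circ_alpha [:: a; b]) (a + b) ((a + b) %/ 2) (2 * (a + b) * ((a + b) %/ 2))).
  lia.
by move=> n; apply: bounds.
Qed.
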